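(* Let $\lambda\in P_+$, $\beta\in Q_+$ and let $x$ be a nilpotent $\Lambda$-submodule of $q_\lambda$ of dimension vector $\beta$. Then for every $i\in I$, $$\varphi_i(x)-\varepsilon_i(x)=(\lambda-\beta;\alpha_i).$$
   Context: $\Gamma$ is a finite graph without loops with vertex set $I$; $\mathfrak g$ is the associated symmetric Kac–Moody algebra with simple roots $\alpha_i$, symmetric bilinear form $(-;-)$ with $(\alpha_i;\alpha_j)=a_{ij}$ ($a_{ii}=2$, $-a_{ij}$ the number of edges between $i\neq j$), $P_+$ the dominant integral weights, $Q_+=\bigoplus\mathbb N\alpha_i$. $\Lambda$ is the preprojective algebra of $\Gamma$ over $\mathbb C$, $s_i$ the simple module at $i$, $q_i$ its injective hull, $q_\lambda=\bigoplus_i q_i^{\oplus(\lambda;\alpha_i)}$. A finite-dimensional module is nilpotent if its composition factors are among the $s_i$; its dimension vector lies in $Q_+$ with $\dim s_i=\alpha_i$. $\varepsilon_i(x)$ is the multiplicity of $s_i$ in the head of $x$, and $\varphi_i(x)$ the multiplicity of $s_i$ in the socle of $q_\lambda/x$. *)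

(* Defs.v *)
From HB Require Import structures.
From mathcomp Require Import all_boot all_order all_algebra.
From mathcomp Require Import complex.
From mathcomp Require Import reals.

Set Implicit Arguments.
Unset Strict Implicit.
Unset Printing Implicit Defensive.

Import Order.TTheory GRing.Theory Num.Theory.
Local Open Scope ring_scope.

(* The graph Gamma: vertex set I, edge set E, every edge e is given (with an
   arbitrary auxiliary orientation) by its endpoints s e, t e with s e != t e
   (no loops; multiple edges allowed).
   Arrows of the double quiver: (true, e) = a_e : s e -> t e,
                                (false, e) = a_e^* : t e -> s e. *)

Section Preproj.
Variables (K : fieldType) (I E : finType) (s t : E -> I).

Definition asrc (a : bool * E) : I := if a.1 then s a.2 else t a.2.
Definition atgt (a : bool * E) : I := if a.1 then t a.2 else s a.2.

Definition cartan (i j : I) : int :=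
  if i == j then 2%:Z
  else - (#|[set e | ((s e == i) && (t e == j)) || ((s e == j) && (t e == i))]|)%:Z.

(* A (possibly infinite-dimensional) module over the preprojective algebra
   Lambda of Gamma over K, written as a representation of the double quiver
   on the total space  M = (+)_i M_i : ridem i is the projection onto M_i,
   rarr a is the action of the arrow a (zero outside M_(asrc a)), and the
   preprojective relations  sum_{t e = i} a_e a_e^* - sum_{s e = i} a_e^* a_e = 0
   hold at every vertex i. *)
Record pmod := PMod {
  pcar :> lmodType K;
  ridem : I -> {linear pcar -> pcar};
  rarr : bool * E -> {linear pcar -> pcar};
  ridem_idem : forall i v, ridem i (ridem i v) = ridem i v;
  ridem_orth : forall i j v, i != j -> ridem i (ridem j v) = 0;
  ridem_sum : forall v, \sum_i ridem i v = v;
  rarr_supp : forall a v, rarr a v = ridem (atgt a) (rarr a (ridem (asrc a) v));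
  preproj_rel : forall i v,
    \sum_(e | t e == i) rarr (true, e) (rarr (false, e) (ridem i v))
    - \sum_(e | s e == i) rarr (false, e) (rarr (true, e) (ridem i v)) = 0
}.

Definition path_act (M : pmod) (p : seq (bool * E)) (v : M) : M :=
  foldr (fun a w => rarr M a w) v p.

Definition loc_nilpotent (M : pmod) : Prop :=
  forall v : M, exists N, forall p, size p = N -> path_act p v = 0.

Definition is_hom (A B : pmod) (f : {linear A -> B}) : Prop :=
  (forall i v, f (ridem A i v) = ridem B i (f v)) /\
  (forall a v, f (rarr A a v) = rarr B a (f v)).

Definition ln_injective (Q : pmod) : Prop :=
  forall (A B : pmod) (f : {linear A -> B}) (g : {linear A -> Q}),
    loc_nilpotent A -> loc_nilpotent B ->
    is_hom f -> injective f -> is_hom g ->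
    exists h : {linear B -> Q}, is_hom h /\ forall v, h (f v) = g v.

(* dim_quot V S T n : S, T subspaces (T inside S) of the K-space V and
   dim (S / T) = n, i.e. there are n vectors of S, linearly independent
   modulo T, spanning S modulo T. *)
Definition dim_quot (V : lmodType K) (S T : V -> Prop) (n : nat) : Prop :=
  exists w : 'I_n -> V,
    (forall k, S (w k)) /\
    (forall c : 'I_n -> K, T (\sum_k c k *: w k) -> forall k, c k = 0) /\
    (forall v, S v -> exists c : 'I_n -> K, T (v - \sum_k c k *: w k)).

Definition zero_sp (V : lmodType K) : V -> Prop := fun v => v = 0.

(* the vertex-i part of the socle of M: vectors of M_i killed by all arrows;
   its dimension is the multiplicity of s_i in soc M *)
Definition soc_at (M : pmod) (i : I) : M -> Prop :=
  fun v => ridem M i v = v /\ forall a, rarr M a v = 0.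

Definition submodule (M : pmod) (X : M -> Prop) : Prop :=
  [/\ X 0, (forall u v, X u -> X v -> X (u + v)),
      (forall (c : K) v, X v -> X (c *: v)),
      (forall i v, X v -> X (ridem M i v)) &
      (forall a v, X v -> X (rarr M a v))].

Definition sub_nilpotent (M : pmod) (X : M -> Prop) : Prop :=
  exists N, forall p v, size p = N -> X v -> path_act p v = 0.

Definition sub_at (M : pmod) (X : M -> Prop) (i : I) : M -> Prop :=
  fun v => X v /\ ridem M i v = v.

(* radical J X of X (J = arrow ideal); X / rad X is the head of X *)
Definition rad_sub (M : pmod) (X : M -> Prop) : M -> Prop :=
  fun v => exists w : bool * E -> M,
    (forall a, X (w a)) /\ v = \sum_a rarr M a (w a).

(* vertex-i part of the socle of M / X, as vectors of M_i (modulo X_i) whose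
   images under all arrows lie in X *)
Definition soc_quot_at (M : pmod) (X : M -> Prop) (i : I) : M -> Prop :=
  fun v => ridem M i v = v /\ forall a, X (rarr M a v).

End Preproj.

Arguments soc_at {K I E s t} M i _.

(* Main.v *)
Require Import Defs.
From HB Require Import structures.
From mathcomp Require Import all_boot all_order all_algebra.
From mathcomp Require Import complex.
From mathcomp Require Import reals.
From mathcomp Require Import zify.
From Stdlib Require Import Classical.
Import GRing.Theory Num.Theory.
Set Implicit Arguments.
Unset Strict Implicit.
Unset Printing Implicit Defensive.
Local Open Scope ring_scope.


Lemma path_act_rcons (K : fieldType) (I E : finType) (s t : E -> I) (M : pmod K s t) p a v :
  path_act (rcons p a) v = path_act p (rarr M a v).
Proof. by rewrite /path_act foldr_rcons. Qed.

Lemma path_act_cat (K : fieldType) (I E : finType) (s t : E -> I) (M : pmod K s t) p q v :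
  path_act (p ++ q) v = path_act p (path_act q v :> M).
Proof. by rewrite /path_act foldr_cat. Qed.

Lemma path_act0 (K : fieldType) (I E : finType) (s t : E -> I) (M : pmod K s t) p :
  path_act p (0 : M) = 0.
Proof. by elim: p => //= a p IH; rewrite IH linear0. Qed.

Lemma nil_mono (K : fieldType) (I E : finType) (s t : E -> I) (M : pmod K s t) (v : M) N :
  (forall p, size p = N -> path_act p v = 0) ->
  forall p, (N <= size p)%N -> path_act p v = 0.
Proof.
move=> HN p Hp; rewrite -(cat_take_drop (size p - N) p) path_act_cat HN ?path_act0 //.
by rewrite size_drop; apply/eqP; rewrite subKn.
Qed.

Section Ext.
Variables (K : fieldType) (I E : finType) (s t : E -> I).
Variables (Q : pmod K s t) (i : I) (w : bool * E -> Q).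
Hypothesis w_supp : forall a, w a = ridem Q (atgt s t a) (w a).
Hypothesis w_src : forall a, asrc s t a != i -> w a = 0.
Hypothesis w_rel : \sum_(e | t e == i) rarr Q (true, e) (w (false, e))
    - \sum_(e | s e == i) rarr Q (false, e) (w (true, e)) = 0.

Definition BT := (Q * K^o)%type.
Lemma pairP (x y : BT) : x.1 = y.1 -> x.2 = y.2 -> x = y.
Proof. by case: x y => [? ?] [? ?] /= -> ->. Qed.
Lemma sc0 (a : K) : (a *: (0 : K^o)) = 0 :> K^o.
Proof. exact: scaler0. Qed.
Lemma sum_fst (J : finType) (P : pred J) (F : J -> BT) :
  (\sum_(k | P k) F k).1 = \sum_(k | P k) (F k).1.
Proof. by apply: (big_morph fst). Qed.
Lemma sum_snd (J : finType) (P : pred J) (F : J -> BT) :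
  (\sum_(k | P k) F k).2 = \sum_(k | P k) (F k).2.
Proof. by apply: (big_morph snd). Qed.

Definition ridemB (j : I) (x : BT) : BT := (ridem Q j x.1, if j == i then x.2 else 0).
Fact ridemB_lin j : linear (ridemB j).
Proof. move=> a [u1 u2] [v1 v2]; rewrite /ridemB /= linearP.
case: (j == i) => /=; first reflexivity.
by apply: pairP => //=; rewrite addr0 sc0. Qed.
HB.instance Definition _ j := GRing.isLinear.Build K BT BT *:%R (ridemB j) (ridemB_lin j).

Definition toK (c : K^o) : K := c.
Lemma toKP (a : K) (u v : K^o) : toK (a *: u + v) = a * toK u + toK v.
Proof. by []. Qed.
Lemma toK0 : toK 0 = 0. Proof. by []. Qed.
Definition rarrB (a : bool * E) (x : BT) : BT := (rarr Q a x.1 + toK x.2 *: w a, 0).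
Fact rarrB_lin a : linear (rarrB a).
Proof. move=> c [u1 u2] [v1 v2]; rewrite /rarrB /=.
apply: pairP => /=; last by rewrite addr0 sc0.
rewrite linearP toKP scalerDl scalerDr addrACA -scalerA; reflexivity.
Qed.
HB.instance Definition _ a := GRing.isLinear.Build K BT BT *:%R (rarrB a) (rarrB_lin a).

Fact B_idem j v : ridemB j (ridemB j v) = ridemB j v.
Proof. by rewrite /ridemB /= ridem_idem; case: (j == i). Qed.
Fact B_orth j k v : j != k -> ridemB j (ridemB k v) = 0.
Proof.
move=> jk; rewrite /ridemB /= ridem_orth //; apply: pairP => //=.
case: eqP => // ji; case: eqP => // ki; by rewrite ji ki eqxx in jk.
Qed.
Fact B_sum v : \sum_j ridemB j v = v.
Proof.
apply: pairP; first by rewrite sum_fst /= ridem_sum.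
rewrite sum_snd /= (bigD1 i) //= eqxx big1 ?addr0 // => j /negbTE -> //.
Qed.
Fact B_supp a v : rarrB a v = ridemB (atgt s t a) (rarrB a (ridemB (asrc s t a) v)).
Proof.
rewrite /rarrB /ridemB /=; apply: pairP => /=; last by case: (_ == i).
rewrite linearD linearZ /= -rarr_supp.
case: (boolP (asrc s t a == i)) => [_|/w_src ->]; first by rewrite [w a in LHS]w_supp.
by rewrite linear0 toK0 scale0r.
Qed.
Fact B_rel j v :
    \sum_(e | t e == j) rarrB (true, e) (rarrB (false, e) (ridemB j v))
    - \sum_(e | s e == j) rarrB (false, e) (rarrB (true, e) (ridemB j v)) = 0.
Proof.
apply: pairP => /=; last first.
  by rewrite !sum_snd /= !big1 ?subr0.
rewrite !sum_fst /=.
under eq_bigr do rewrite scale0r addr0 linearD linearZ /=.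
under [X in _ - X]eq_bigr do rewrite scale0r addr0 linearD linearZ /=.
rewrite !big_split /= opprD addrACA preproj_rel add0r.
rewrite -!scaler_sumr -scalerBr.
case: eqP => [->|_]; last by rewrite scale0r.
by rewrite w_rel scaler0.
Qed.

Definition Bmod : pmod K s t :=
  @PMod K I E s t BT ridemB rarrB B_idem B_orth B_sum B_supp B_rel.


Definition injB (v : Q) : BT := (v, 0).
Fact injB_lin : linear injB.
Proof. move=> a u v; apply: pairP => //=; by rewrite addr0 sc0. Qed.
HB.instance Definition _ := GRing.isLinear.Build K Q BT *:%R injB injB_lin.

Lemma pathB_fst p (v : Q) : path_act (M := Bmod) p (v, 0) = (path_act p v, 0).
Proof.
elim: p => //= a p ->; rewrite /rarrB /=; apply: pairP => //=.
by rewrite toK0 scale0r addr0.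
Qed.

Lemma Bnil : loc_nilpotent Q -> loc_nilpotent Bmod.
Proof.
move=> Qnil x.
have [N HN] := fin_all_exists (fun a => Qnil (rarr Q a x.1 + toK x.2 *: w a)).
exists (\max_a N a).+1 => p.
case/lastP: p => [//|p a]; rewrite size_rcons => -[Hp].
rewrite path_act_rcons /= /rarrB pathB_fst (nil_mono (HN a)) //.
by rewrite Hp (bigmax_sup a).
Qed.

Lemma ext_lift : loc_nilpotent Q -> ln_injective Q ->
  exists v, ridem Q i v = v /\ forall a, rarr Q a v = w a.
Proof.
move=> Qnil Qinj.
have := Qinj Q Bmod injB idfun Qnil (Bnil Qnil).
case.
- split => j v /=; apply: pairP => //=; first by case: (_ == i).
  by rewrite toK0 scale0r addr0.
- by move=> u v [].
- by [].
move=> h [[hid harr] hf].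
exists (h ((0 : Q), (1 : K^o))); split.
  by rewrite -hid /= /ridemB /= eqxx linear0.
move=> a; rewrite -harr /= /rarrB /= linear0 add0r.
have -> : toK 1 = 1 by [].
by rewrite scale1r; apply: hf.
Qed.
End Ext.


Section LA.
Variable K : fieldType.

Definition subsp (V : lmodType K) (S : V -> Prop) :=
  [/\ S 0, (forall u v, S u -> S v -> S (u + v)) & (forall (c : K) v, S v -> S (c *: v))].
Definition fd (V : lmodType K) (S : V -> Prop) n := dim_quot S (@zero_sp K V) n.
Definition lcr (V : lmodType K) n (b : 'I_n -> V) (r : 'rV[K]_n) := \sum_k r 0 k *: b k.

Lemma subsp_sum (V : lmodType K) (S : V -> Prop) (J : finType) (F : J -> V) :
  subsp S -> (forall j, S (F j)) -> S (\sum_j F j).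
Proof. by case=> S0 SD _ HF; elim/big_ind: _ => // j _; apply: HF. Qed.

Lemma subsp_lc (V : lmodType K) (S : V -> Prop) n (b : 'I_n -> V) (c : 'I_n -> K) :
  subsp S -> (forall k, S (b k)) -> S (\sum_k c k *: b k).
Proof. move=> HS Hb; apply: subsp_sum => // k; case: HS => _ _ HZ; apply: HZ; apply: Hb. Qed.

Lemma subspB (V : lmodType K) (S : V -> Prop) u v : subsp S -> S u -> S v -> S (u - v).
Proof. by case=> _ SD SZ Su Sv; apply: SD => //; rewrite -scaleN1r; apply: SZ. Qed.

Lemma fd_basis (V : lmodType K) (S : V -> Prop) n : fd S n ->
  exists b : 'I_n -> V, [/\ forall k, S (b k),
     (forall c : 'I_n -> K, \sum_k c k *: b k = 0 -> forall k, c k = 0) &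
     (forall v, S v -> exists c : 'I_n -> K, v = \sum_k c k *: b k)].
Proof.
case=> b [bS [bi bs]]; exists b; split => // v /bs [c Hc]; exists c.
by apply/eqP; rewrite -subr_eq0; apply/eqP.
Qed.

Lemma fd_intro (V : lmodType K) (S : V -> Prop) n (b : 'I_n -> V) :
  (forall k, S (b k)) ->
  (forall c : 'I_n -> K, \sum_k c k *: b k = 0 -> forall k, c k = 0) ->
  (forall v, S v -> exists c : 'I_n -> K, v = \sum_k c k *: b k) -> fd S n.
Proof.
move=> bS bi bs; exists b; split; [done|split; [done|]] => v /bs [c Hc]; exists c.
by rewrite /zero_sp Hc subrr.
Qed.

Lemma fd_eq (V : lmodType K) (S S' : V -> Prop) n :
  (forall v, S v <-> S' v) -> fd S n -> fd S' n.
Proof.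
move=> HS /fd_basis [b [bS bi bs]]; apply: (fd_intro (b := b)) => //.
  by move=> k; apply/HS.
by move=> v /HS; apply: bs.
Qed.

Lemma lcrE (V : lmodType K) n (b : 'I_n -> V) (c : 'I_n -> K) :
  \sum_k c k *: b k = lcr b (\row_k c k).
Proof. by apply: eq_bigr => k _; rewrite mxE. Qed.

Lemma lcrD (V : lmodType K) n (b : 'I_n -> V) r1 r2 : lcr b (r1 + r2) = lcr b r1 + lcr b r2.
Proof. by rewrite /lcr -big_split; apply: eq_bigr => k _; rewrite mxE scalerDl. Qed.
Lemma lcrZ (V : lmodType K) n (b : 'I_n -> V) a r : lcr b (a *: r) = a *: lcr b r.
Proof. by rewrite /lcr scaler_sumr; apply: eq_bigr => k _; rewrite mxE scalerA. Qed.
Lemma lcr0 (V : lmodType K) n (b : 'I_n -> V) : lcr b 0 = 0.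
Proof. by rewrite /lcr big1 // => k _; rewrite mxE scale0r. Qed.
Lemma lcrB (V : lmodType K) n (b : 'I_n -> V) r1 r2 : lcr b (r1 - r2) = lcr b r1 - lcr b r2.
Proof. by rewrite lcrD -[- r2]scaleN1r lcrZ scaleN1r. Qed.
Lemma lcr_mul (V : lmodType K) n m (b : 'I_n -> V) (d : 'rV_m) (A : 'M_(m, n)) :
  lcr b (d *m A) = \sum_l d 0 l *: lcr b (row l A).
Proof.
rewrite /lcr; under [RHS]eq_bigr do rewrite scaler_sumr.
rewrite exchange_big /=; apply: eq_bigr => k _; rewrite mxE scaler_suml.
by apply: eq_bigr => l _; rewrite mxE scalerA.
Qed.

Lemma lc_mul2 (V : lmodType K) n m (b : 'I_n -> V) (c : 'I_m -> K) (A : 'M_(m, n)) :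
  \sum_l c l *: lcr b (row l A) = lcr b (\row_l c l *m A).
Proof. by rewrite lcr_mul; apply: eq_bigr => l _; rewrite mxE. Qed.

Lemma indep_le (V : lmodType K) (S : V -> Prop) n n' (b : 'I_n -> V) (b' : 'I_n' -> V) :
  (forall v, S v -> exists c : 'I_n -> K, v = \sum_k c k *: b k) ->
  (forall k, S (b' k)) ->
  (forall c : 'I_n' -> K, \sum_k c k *: b' k = 0 -> forall k, c k = 0) -> (n' <= n)%N.
Proof.
move=> span inS ind.
have [C HC] := fin_all_exists (fun k => span _ (inS k)).
pose A := \matrix_(k, l) C k l.
have : row_free A.
  apply: inj_row_free => d dA; apply/rowP => k; rewrite mxE.
  apply: (ind (fun k => d 0 k)).
  have -> : \sum_k d 0 k *: b' k = lcr b (d *m A).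
    rewrite lcr_mul; apply: eq_bigr => l _; congr (_ *: _).
    by rewrite HC lcrE; congr lcr; apply/rowP => j; rewrite !mxE.
  by rewrite dA lcr0.
by rewrite /row_free => /eqP <-; exact: rank_leq_col.
Qed.

Lemma fd_uniq (V : lmodType K) (S : V -> Prop) n n' : fd S n -> fd S n' -> n = n'.
Proof.
move=> /fd_basis [b [bS bi bs]] /fd_basis [b' [bS' bi' bs']].
by apply/eqP; rewrite eqn_leq (indep_le bs' bS bi) (indep_le bs bS' bi').
Qed.

Lemma rowspace_of n (P : 'rV[K]_n -> Prop) :
  P 0 -> (forall u v, P u -> P v -> P (u + v)) -> (forall c u, P u -> P (c *: u)) ->
  exists M : 'M[K]_n, forall u, P u <-> (u <= M)%MS.
Proof.
move=> P0 PD PZ.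
suff: forall d (A : 'M[K]_n), (forall u, (u <= A)%MS -> P u) -> (n - \rank A <= d)%N ->
  exists M : 'M[K]_n, forall u, P u <-> (u <= M)%MS.
  by move/(_ n 0); apply => [u|]; [rewrite submx0 => /eqP -> | rewrite leq_subr].
elim=> [|d IH] A HA Hd.
  exists A => u; split => [_|]; last exact: HA.
  apply: submx_full; rewrite /row_full eqn_leq rank_leq_col /=.
  by rewrite -subn_eq0 -leqn0.
case: (classic (forall u, P u -> (u <= A)%MS)) => [H|].
  by exists A => u; split => [/H|/HA].
move/not_all_ex_not => [u Hu0]; have Pu := not_imply_elim _ _ Hu0.
have Hu : ~~ (u <= A)%MS by apply/negP; apply: (not_imply_elim2 _ _ Hu0).
apply: (IH (A + u)%MS).
  move=> v /sub_addsmxP [[x y] /= ->]; apply: PD.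
    by apply: HA; exact: submxMl.
  by rewrite [y]mx11_scalar mul_scalar_mx; apply: PZ.
have : (A < A + u)%MS.
  rewrite ltmxE addsmxSl /=; apply: contra Hu => H.
  exact: submx_trans (addsmxSr A u) H.
rewrite ltmxErank => /andP [_ Hr].
have := rank_leq_col (A + u)%MS.
move: Hd Hr; lia.
Qed.


Lemma sub_fd (V : lmodType K) (S T : V -> Prop) n :
  subsp S -> fd S n -> subsp T -> (forall v, T v -> S v) ->
  exists k e, [/\ (k + e = n)%N, fd T k & dim_quot S T e].
Proof.
move=> HS /fd_basis [b [bS bi bs]] HT TS.
pose P (c : 'rV[K]_n) := T (lcr b c).
have [M HM] : exists M : 'M[K]_n, forall u, P u <-> (u <= M)%MS.
  case: (HT) => T0 TD TZ.
  apply: rowspace_of; rewrite /P.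
  - by rewrite lcr0.
  - by move=> u v Pu Pv; rewrite lcrD; apply: TD.
  - by move=> c u Pu; rewrite lcrZ; apply: TZ.
have lcr_inj : forall r, lcr b r = 0 -> r = 0.
  move=> r Hr; apply/rowP => k; rewrite mxE; apply: (bi (fun k => r 0 k)); exact: Hr.
have lcrS : forall r, S (lcr b r) by move=> r; apply: subsp_lc.
exists (\rank M), (\rank (M^C)%MS); split.
- by rewrite mxrank_compl subnKC // rank_leq_col.
- apply: (fd_intro (b := fun l => lcr b (row l (row_base M)))).
  + move=> l; apply/HM; rewrite -(eq_row_base M); exact: row_sub.
  + move=> c; rewrite lc_mul2 => /lcr_inj.
    move/eqP; rewrite mulmx_free_eq0 ?row_base_free // => /eqP /rowP H k.
    by have := H k; rewrite !mxE.
  + move=> v Tv; have [c Hc] := bs v (TS v Tv).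
    have : ((\row_k c k) <= row_base M)%MS.
      by rewrite (eq_row_base M); apply/HM; rewrite /P -lcrE -Hc.
    case/submxP => D HD; exists (fun l => D 0 l).
    by rewrite Hc lcrE HD lc_mul2; congr lcr; congr (_ *m _); apply/rowP => l; rewrite mxE.
- exists (fun l => lcr b (row l (row_base (M^C)%MS))); split; last split.
  + by move=> l; apply: lcrS.
  + move=> c; rewrite lc_mul2 => /HM H.
    have H2 : ((\row_k c k) *m row_base (M^C)%MS <= M :&: M^C)%MS.
      rewrite sub_capmx H /=; apply: submx_trans (submxMl _ _) _.
      by rewrite (eq_row_base (M^C)%MS) submx_refl.
    move: H2; rewrite capmx_compl submx0 mulmx_free_eq0 ?row_base_free // => /eqP /rowP H3 k.
    by have := H3 k; rewrite !mxE.
  + move=> v Sv; have [c Hc] := bs v Sv.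
    have : ((\row_k c k) <= M + M^C)%MS by apply: submx_full; apply: addsmx_compl_full.
    case/sub_addsmxP => -[x y] /= Hxy.
    have : (y *m M^C <= row_base (M^C)%MS)%MS by rewrite (eq_row_base (M^C)%MS) submxMl.
    case/submxP => D HD; exists (fun l => D 0 l).
    rewrite lc_mul2.
    have -> : \row_l D 0 l = D by apply/rowP => l; rewrite mxE.
    rewrite -HD Hc lcrE Hxy lcrD addrK.
    by apply/HM; apply: submxMl.
Qed.

Lemma f0_of (V V' : lmodType K) (f : V -> V') :
  (forall u v, f (u + v) = f u + f v) -> f 0 = 0.
Proof.
by move=> fD; have := fD 0 0; rewrite addr0 => H; apply: (addrI (f 0)); rewrite addr0 -H.
Qed.

Lemma fsum (V V' : lmodType K) (f : V -> V') (fD : forall u v, f (u + v) = f u + f v)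
  (J : finType) (F : J -> V) : f (\sum_j F j) = \sum_j f (F j).
Proof. exact: (big_morph f fD (f0_of fD)). Qed.

Lemma fd_ext (V V' : lmodType K) (f : V -> V') (S : V -> Prop) k r :
  subsp S -> (forall u v, f (u + v) = f u + f v) -> (forall (c : K) v, f (c *: v) = c *: f v) ->
  fd (fun v => S v /\ f v = 0) k -> fd (fun y => exists2 v, S v & f v = y) r ->
  fd S (k + r).
Proof.
move=> HS fD fZ /fd_basis [u [uS ui us]] /fd_basis [y [yS yi ys]].
have [v Hv] := fin_all_exists (fun l => let: ex_intro2 x H1 H2 := yS l in ex_intro _ x (conj H1 H2)).
have vS l : S (v l) by case: (Hv l).
have vy l : f (v l) = y l by case: (Hv l).
have fB a b : f (a - b) = f a - f b.
  by rewrite fD -scaleN1r fZ scaleN1r.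
pose z (j : 'I_(k + r)) := match split j with inl a => u a | inr l => v l end.
have zl a : z (lshift r a) = u a by rewrite /z (unsplitK (inl _)).
have zr l : z (rshift k l) = v l by rewrite /z (unsplitK (inr _)).
apply: (fd_intro (b := z)).
- by move=> j; rewrite /z; case: split => [a|l]; [case: (uS a)|].
- move=> c; rewrite big_split_ord /=.
  under eq_bigr do rewrite zl.
  under [X in _ + X]eq_bigr do rewrite zr.
  move=> H.
  have Hd : \sum_l c (rshift k l) *: y l = 0.
    have := congr1 f H; rewrite fD !(fsum fD) (f0_of fD).
    under eq_bigr do rewrite fZ (proj2 (uS _)) scaler0.
    rewrite big1 // add0r => H1; rewrite -[RHS]H1; apply: eq_bigr => l _; by rewrite fZ vy.
  have Hd' := yi _ Hd.
  have Hc : \sum_a c (lshift r a) *: u a = 0.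
    by move: H; rewrite [X in _ + X]big1 ?addr0 // => l _; rewrite Hd' scale0r.
  have Hc' := ui _ Hc.
  by move=> j; case: (split_ordP j) => a ->.
- move=> w Sw.
  have [d Hd] := ys (f w) (ex_intro2 _ _ w Sw erefl).
  have Hk : S (w - \sum_l d l *: v l) /\ f (w - \sum_l d l *: v l) = 0.
    split; first by apply: subspB => //; apply: subsp_lc.
    rewrite fB (fsum fD) Hd; apply/eqP; rewrite subr_eq0; apply/eqP; apply: eq_bigr => l _; by rewrite fZ vy.
  have [c Hc] := us _ Hk.
  exists (fun j => match split j with inl a => c a | inr l => d l end).
  rewrite big_split_ord /=.
  under eq_bigr do rewrite zl (unsplitK (inl _)).
  under [X in _ + X]eq_bigr do rewrite zr (unsplitK (inr _)).
  by rewrite -Hc subrK.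
Qed.


Lemma fd_prod (V : lmodType K) (A : finType) (Sa : A -> V -> Prop) (na : A -> nat) :
  (forall a, subsp (Sa a)) -> (forall a, fd (Sa a) (na a)) ->
  fd (fun w : {ffun A -> V} => forall a, Sa a (w a)) (\sum_a na a).
Proof.
move=> HS Hfd.
pose P (r : seq A) (w : {ffun A -> V}) :=
  forall a, (a \in r -> Sa a (w a)) /\ (a \notin r -> w a = 0).
suff H : forall r : seq A, uniq r -> fd (P r) (\sum_(a <- r) na a).
  have := H (enum A) (enum_uniq A); rewrite big_enum /=; apply: fd_eq => w.
  split => Hw a; first by case: (Hw a) => H1 _; apply: H1; rewrite mem_enum.
  by split; [move=> _; apply: Hw | rewrite mem_enum].
elim => [_|a0 r IH] /=.
  rewrite big_nil; apply: (fd_intro (b := fun _ : 'I_0 => 0)).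
  - by case.
  - by move=> c _ [].
  - move=> w Hw; exists (fun _ => 0); rewrite big_ord0; apply/ffunP => a.
    by rewrite ffunE; apply: (Hw a).2.
case/andP => a0r ur; rewrite big_cons addnC.
apply: (@fd_ext _ _ (fun w : {ffun A -> V} => w a0)).
- split.
  + move=> a; rewrite ffunE; split => // _; by case: (HS a).
  + move=> u v Hu Hv a; rewrite ffunE; split => Ha.
      by case: (HS a) => _ SD _; apply: SD; [apply: (Hu a).1 | apply: (Hv a).1].
    by rewrite (Hu a).2 // (Hv a).2 // addr0.
  + move=> c v Hv a; rewrite ffunE; split => Ha.
      by case: (HS a) => _ _ SZ; apply: SZ; apply: (Hv a).1.
    by rewrite (Hv a).2 // scaler0.
- by move=> u v; rewrite ffunE.
- by move=> c v; rewrite ffunE.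
- apply: fd_eq (IH ur) => w; split.
    move=> Hw; split.
      move=> a; rewrite in_cons; case: (Hw a) => H1 H2; split.
        case/orP => [/eqP ->|]; last exact: H1.
        by rewrite (proj2 (Hw a0)) //; case: (HS a0).
      by case/norP => _; apply: H2.
    by apply: (Hw a0).2.
  move=> [Hw Hw0] a; case: (Hw a) => H1 H2; split.
    by move=> Ha; apply: H1; rewrite in_cons Ha orbT.
  move=> Ha; case: (eqVneq a a0) => [->|ne] //; apply: H2.
  by rewrite in_cons negb_or ne.
- apply: fd_eq (Hfd a0) => y; split.
    move=> Hy; exists [ffun a => if a == a0 then y else 0]; last by rewrite ffunE eqxx.
    move=> a; rewrite ffunE in_cons; case: (eqVneq a a0) => [->|ne] /=.
      by split.
    by split => // _; case: (HS a).
  by case=> w Hw <-; apply: (Hw a0).1; rewrite in_cons eqxx.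
Qed.

End LA.


Section PM.
Variables (K : fieldType) (I E : finType) (s t : E -> I) (M : pmod K s t).

Lemma ridem_rarr i a (x : M) :
  ridem M i (rarr M a x) = if atgt s t a == i then rarr M a x else 0.
Proof.
rewrite [in LHS]rarr_supp; case: eqP => [<-|/eqP ne].
  by rewrite ridem_idem -rarr_supp.
by rewrite ridem_orth // eq_sym.
Qed.

Lemma rarr_src a (x : M) : rarr M a (ridem M (asrc s t a) x) = rarr M a x.
Proof. by rewrite [LHS]rarr_supp [RHS]rarr_supp ridem_idem. Qed.

Lemma rarr_off a j (x : M) : asrc s t a != j -> rarr M a (ridem M j x) = 0.
Proof. by move=> ne; rewrite rarr_supp ridem_orth // !linear0. Qed.

End PM.

Lemma sum_pairs (V : nmodType) (E : finType) (F : bool * E -> V) :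
  \sum_(a : bool * E) F a = \sum_e F (true, e) + \sum_e F (false, e).
Proof.
rewrite (eq_bigr (fun p => F (p.1, p.2))); last by case.
by rewrite -(pair_bigA _ (fun b e => F (b, e))) big_bool.
Qed.

Lemma posz_sum (J : finType) (P : pred J) (F : J -> nat) :
  (\sum_(j | P j) F j)%N%:Z = \sum_(j | P j) (F j)%:Z.
Proof. by apply: (big_morph Posz PoszD). Qed.

Lemma cartan_sum (I E : finType) (s t : E -> I) (noloop : forall e, s e != t e)
    (beta : I -> nat) i :
  \sum_(j : I) (beta j)%:Z * cartan s t j i =
  (2 * beta i)%:Z - (\sum_e ((if s e == i then beta (t e) else 0)
                            + (if t e == i then beta (s e) else 0)))%N%:Z.
Proof.
rewrite (bigD1 i) //= /cartan eqxx.
have -> : \sum_(j | j != i) (beta j)%:Z * (if j == i then 2%:Z else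
      - (#|[set e | (s e == j) && (t e == i) || (s e == i) && (t e == j)]|)%:Z)
  = - (\sum_(j | j != i) (beta j * #|[set e | (s e == j) && (t e == i) || (s e == i) && (t e == j)]|)%N)%:Z.
  rewrite posz_sum -sumrN; apply: eq_bigr => j /negbTE ->.
  by rewrite mulrN PoszM.
rewrite mulrC -PoszM mulnC; congr (_ - _%:Z).
under eq_bigr do rewrite -sum1dep_card big_distrr big_mkcond /=.
rewrite exchange_big /=; apply: eq_bigr => e _.
have ne := noloop e.
case: (eqVneq (s e) i) => [si|nsi].
  have nti : t e != i by rewrite -si eq_sym.
  rewrite (bigD1 (t e)) //= si eqxx orbT muln1 (negbTE nti) addn0.
  rewrite big1 ?addn0 // => j /andP [ji jt].
  by rewrite andbF (eq_sym (t e)) (negbTE jt).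
case: (eqVneq (t e) i) => [ti|nti2].
  rewrite (bigD1 (s e)) //= eqxx muln1.
  rewrite big1 ?addn0 // => j /andP [ji js].
  by rewrite eq_sym (negbTE js).
rewrite big1 // => j _.
by rewrite andbF.
Qed.

Lemma fd_zero (K : fieldType) (V : lmodType K) : fd (fun y : V => y = 0) 0.
Proof.
apply: (fd_intro (b := fun _ : 'I_0 => 0)).
- by [].
- by move=> c _ [].
- by move=> v ->; exists (fun _ => 0); rewrite big_ord0.
Qed.

Lemma sum_na (I E : finType) (s t : E -> I) (beta : I -> nat) i :
  (\sum_(a : bool * E) (if asrc s t a == i then beta (atgt s t a) else 0))%N =
  (\sum_e ((if s e == i then beta (t e) else 0) + (if t e == i then beta (s e) else 0)))%N.
Proof.
rewrite (eq_bigr (fun p => (if asrc s t (p.1, p.2) == i then beta (atgt s t (p.1, p.2)) else 0)%N));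
  last by case.
rewrite -(pair_bigA _ (fun b e => (if asrc s t (b, e) == i then beta (atgt s t (b, e)) else 0)%N)).
by rewrite big_bool /= -big_split.
Qed.

Theorem mainTheorem6 (R : realType) (I E : finType) (s t : E -> I)
    (noloop : forall e, s e != t e)
    (lam : I -> nat) (Q : pmod R[i] s t)
    (Qnil : loc_nilpotent Q) (Qinj : ln_injective Q)
    (Qsoc : forall i, dim_quot (soc_at Q i) (@zero_sp _ Q) (lam i))
    (beta : I -> nat) (X : Q -> Prop)
    (Xsub : submodule X) (Xnil : sub_nilpotent X)
    (Xdim : forall i, dim_quot (sub_at X i) (@zero_sp _ Q) (beta i)) :
  forall i : I, exists phi eps : nat,
    [/\ dim_quot (soc_quot_at X i) (sub_at X i) phi,
        dim_quot (sub_at X i) (sub_at (rad_sub X) i) eps &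
        (phi%:Z - eps%:Z = (lam i)%:Z - \sum_(j : I) (beta j)%:Z * cartan s t j i)%R].
Proof.
move=> i.
have [X0 XD XZ Xid Xarr] := Xsub.
have subX : subsp X by split.
have subXj : forall j, subsp (sub_at X j).
  move=> j; split; rewrite /sub_at.
  - by split => //; rewrite linear0.
  - by move=> u v [Xu Hu] [Xv Hv]; split; [apply: XD | rewrite linearD Hu Hv].
  - by move=> c v [Xv Hv]; split; [apply: XZ | rewrite linearZ Hv].
pose Xi := sub_at X i.
have subXi : subsp Xi := subXj i.
pose JXi := sub_at (rad_sub X) i.
have JX_X : forall v, rad_sub X v -> X v.
  by move=> v [u [Xu ->]]; apply: subsp_sum => // a; apply: Xarr.
have subJXi : subsp JXi.
  split.
  - split; last by rewrite linear0.
    by exists (fun _ => 0); split => //; rewrite big1 // => a _; rewrite linear0.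
  - move=> u v [[wu [Xwu ->]] Hu] [[wv [Xwv ->]] Hv]; split; last by rewrite linearD Hu Hv.
    exists (fun a => wu a + wv a); split; first by move=> a; apply: XD.
    by rewrite -big_split; apply: eq_bigr => a _; rewrite linearD.
  - move=> c v [[w [Xw ->]] Hv]; split; last by rewrite linearZ Hv.
    exists (fun a => c *: w a); split; first by move=> a; apply: XZ.
    by rewrite scaler_sumr; apply: eq_bigr => a _; rewrite linearZ.
have JXi_Xi : forall v, JXi v -> Xi v by move=> v [/JX_X Hv H]; split.
have [k [eps [Hkeps fdJ dqeps]]] := sub_fd subXi (Xdim i) subJXi JXi_Xi.
pose Sa (a : bool * E) (y : Q) : Prop :=
  if asrc s t a == i then sub_at X (atgt s t a) y else y = 0.
pose na (a : bool * E) := if asrc s t a == i then beta (atgt s t a) else 0%N.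
have subSa : forall a, subsp (Sa a).
  move=> a; rewrite /Sa; case: (_ == i); first exact: subXj.
  by split => //; [move=> u v -> ->; rewrite addr0 | move=> c v ->; rewrite scaler0].
have fdSa : forall a, fd (Sa a) (na a).
  by move=> a; rewrite /Sa /na; case: (_ == i); [apply: Xdim | apply: fd_zero].
pose W := fun w : {ffun bool * E -> Q} => forall a, Sa a (w a).
have fdW : fd W (\sum_a na a) := fd_prod subSa fdSa.
have subW : subsp W.
  split.
  - by move=> a; rewrite ffunE; case: (subSa a).
  - by move=> u v Hu Hv a; rewrite ffunE; case: (subSa a) => _ SD _; apply: SD.
  - by move=> c v Hv a; rewrite ffunE; case: (subSa a) => _ _ SZ; apply: SZ.
pose d1 (w : {ffun bool * E -> Q}) : Q :=
  \sum_(e | t e == i) rarr Q (true, e) (w (false, e))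
  - \sum_(e | s e == i) rarr Q (false, e) (w (true, e)).
have d1D : forall u v, d1 (u + v) = d1 u + d1 v.
  move=> u v; rewrite /d1.
  under eq_bigr do rewrite ffunE linearD.
  under [X in _ - X]eq_bigr do rewrite ffunE linearD.
  by rewrite !big_split /= opprD addrACA.
have d1Z : forall (c : R[i]) v, d1 (c *: v) = c *: d1 v.
  move=> c v; rewrite /d1 scalerBr !scaler_sumr.
  by congr (_ - _); apply: eq_bigr => e _; rewrite ffunE linearZ.
pose Z := fun w => W w /\ d1 w = 0.
have subZ : subsp Z.
  case: subW => W0 WD WZ.
  split.
  - by split; [apply: W0 | apply: f0_of d1D].
  - by move=> u v [Wu du] [Wv dv]; split; [apply: WD | rewrite d1D du dv addr0].
  - by move=> c v [Wv dv]; split; [apply: WZ | rewrite d1Z dv scaler0].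
have [z [e1 [_ fdZ _]]] := sub_fd subW fdW subZ (fun w (H : Z w) => H.1).
have imgJ : forall y, JXi y <-> (exists2 w, W w & d1 w = y).
  move=> y; split.
  - move=> [[u [Xu Hy]] Hi].
    exists [ffun a : bool * E => if a.1 then
              (if s a.2 == i then - ridem Q (t a.2) (u (false, a.2)) else 0)
            else (if t a.2 == i then ridem Q (s a.2) (u (true, a.2)) else 0)].
      move=> [[] e]; rewrite /Sa ffunE /asrc /atgt /=; case: ifP => H; rewrite ?H //; split.
      + by rewrite -scaleN1r; apply: XZ; apply: Xid; apply: Xu.
      + by rewrite linearN ridem_idem.
      + by apply: Xid; apply: Xu.
      + by rewrite ridem_idem.
    rewrite -Hi Hy linear_sum sum_pairs /d1 big_mkcond [X in _ - X]big_mkcond -sumrN.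
    congr (_ + _); apply: eq_bigr => e _; rewrite ffunE /= ridem_rarr /atgt /=.
      by case: ifP => H //; rewrite H; exact: rarr_src.
    by case: ifP => H; rewrite ?oppr0 // H linearN opprK; exact: rarr_src.
  - move=> [w Ww <-]; split.
    + exists (fun a : bool * E => if a.1 then (if t a.2 == i then w (false, a.2) else 0)
              else (if s a.2 == i then - w (true, a.2) else 0)); split.
        move=> [[] e] /=; case: ifP => H //.
          by have := Ww (false, e); rewrite /Sa /asrc /= H => -[].
        by rewrite -scaleN1r; apply: XZ; have := Ww (true, e); rewrite /Sa /asrc /= H => -[].
      rewrite sum_pairs /d1 big_mkcond [X in _ - X]big_mkcond -sumrN /=.
      congr (_ + _); apply: eq_bigr => e _; case: ifP => _ //.
        by rewrite linear0.
      by rewrite linearN.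
      by rewrite !linear0.
    + rewrite /d1 linearB; congr (_ - _); rewrite linear_sum; apply: eq_bigr => e He;
        by rewrite ridem_rarr /atgt /= He.
have fdW' := fd_ext subW d1D d1Z fdZ (fd_eq imgJ fdJ).
have Hzk := fd_uniq fdW' fdW.
pose S' := soc_quot_at X i.
have subS' : subsp S'.
  split.
  - by split; [rewrite linear0 | move=> a; rewrite linear0].
  - move=> u v [Hu Xu] [Hv Xv]; split; first by rewrite linearD Hu Hv.
    by move=> a; rewrite linearD; apply: XD; [apply: Xu | apply: Xv].
  - move=> c v [Hv Xv]; split; first by rewrite linearZ Hv.
    by move=> a; rewrite linearZ; apply: XZ; apply: Xv.
pose psi (v : Q) : {ffun bool * E -> Q} :=
  [ffun a => if asrc s t a == i then rarr Q a v else 0].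
have psiD : forall u v, psi (u + v) = psi u + psi v.
  by move=> u v; apply/ffunP => a; rewrite !ffunE; case: ifP => _; rewrite ?linearD ?addr0.
have psiZ : forall (c : R[i]) v, psi (c *: v) = c *: psi v.
  by move=> c v; apply/ffunP => a; rewrite !ffunE; case: ifP => _; rewrite ?linearZ ?scaler0.
have kerS : forall v, soc_at Q i v <-> (S' v /\ psi v = 0).
  move=> v; split.
  - move=> [Hv Ha]; split; first by split => // a; rewrite Ha.
    by apply/ffunP => a; rewrite !ffunE Ha; case: ifP.
  - move=> [[Hv _] Hpsi]; split => // a.
    case: (eqVneq (asrc s t a) i) => [e|ne].
      by move/ffunP: Hpsi => /(_ a); rewrite !ffunE e eqxx.
    by rewrite -Hv rarr_off.
have imgS : forall w, Z w <-> (exists2 v, S' v & psi v = w).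
  move=> w; split.
  - move=> [Ww dw].
    have w_supp : forall a, w a = ridem Q (atgt s t a) (w a).
      move=> a; have := Ww a; rewrite /Sa; case: ifP => _; first by case=> _ ->.
      by move=> ->; rewrite linear0.
    have w_src : forall a, asrc s t a != i -> w a = 0.
      by move=> a /negbTE na'; have := Ww a; rewrite /Sa na'.
    have [v [Hv Hva]] := ext_lift w_supp w_src dw Qnil Qinj.
    exists v.
      split => // a; rewrite Hva; have := Ww a; rewrite /Sa; case: ifP => _; first by case.
      by move=> ->.
    apply/ffunP => a; rewrite ffunE; case: ifP => ai; first exact: Hva.
    by rewrite w_src // ai.
  - move=> [v [Hv Xv] <-]; split.
    + move=> a; rewrite /Sa ffunE; case: ifP => ai; rewrite ?ai //; split; first exact: Xv.
      by rewrite ridem_rarr eqxx.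
    + rewrite /d1.
      under eq_bigr => e Hte do rewrite ffunE /asrc /= Hte.
      under [X in _ - X]eq_bigr => e Hse do rewrite ffunE /asrc /= Hse.
      by rewrite -Hv preproj_rel.
have fdS' := fd_ext subS' psiD psiZ (fd_eq kerS (Qsoc i)) (fd_eq imgS fdZ).
have XiS' : forall v, Xi v -> S' v by move=> v [Xv Hv]; split => // a; apply: Xarr.
have [k' [phi [Hk'phi fdXi' dqphi]]] := sub_fd subS' fdS' subXi XiS'.
have Hk' := fd_uniq fdXi' (Xdim i).
exists phi, eps; split => //.
rewrite (cartan_sum noloop beta i).
move: Hzk; rewrite /na sum_na => Hzk.
move: Hk'phi Hk' Hkeps Hzk.
generalize (\sum_e ((if s e == i then beta (t e) else 0) + (if t e == i then beta (s e) else 0)))%N.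
move=> *; lia.
Qed.
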